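(* Let $\mathbb{G}$ be an $E$-group, $\alpha\subseteq E$ and $n\ge1$. Suppose $\mathbb{G}[\alpha]$ is compatible with every free amalgamation chain of length $m$, $1\le m\le n$, whose constituents are $\mathrm{Cay}(\mathbb{G}[\alpha_i])$ with $\alpha_i\subsetneq\alpha$; that is, for every such chain $\mathbb{A}$ and every $w\in\alpha^*$ with $[w]_{\mathbb{G}}=1$, $\pi_w$ is the identity on the vertex set of $\mathbb{A}$. Then $\mathbb{G}[\alpha]$ is $N$-acyclic for $N=n+2$.
   Context: Let $E$ be a finite set. An $E$-group is a group $\mathbb{G}$ together with an inclusion $E\subseteq\mathbb{G}$ such that $E$ generates $\mathbb{G}$ and every $e\in E$ satisfies $e\neq1$, $e^2=1$. For $w=e_1\cdots e_n\in E^*$, $[w]_{\mathbb{G}}=e_1\cdots e_n$; for $\alpha\subseteq E$, $\mathbb{G}[\alpha]$ is the subgroup generated by $\alpha$. An $E$-graph is $\mathbb{H}=(V,(R_e)_{e\in E})$ with each $R_e$ symmetric and each vertex having at most one $R_e$-neighbour; $\pi_e$ is the permutation of $V$ swapping each vertex with its $R_e$-neighbour if any and fixing it otherwise, and $\pi_{e_1\cdots e_n}=\pi_{e_n}\circ\cdots\circ\pi_{e_1}$. Free amalgamation chain: given $m\ge1$, sets $\alpha_1,\dots,\alpha_m\subsetneq\alpha$, and elements $g_i\in\mathbb{G}[\alpha_i]$ for $1\le i<m$ such that for every $1<i<m$ the sets $\mathbb{G}[\alpha_{i-1}\cap\alpha_i]$ and $g_i\mathbb{G}[\alpha_i\cap\alpha_{i+1}]$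 are disjoint, the chain $\mathbb{A}=\bigoplus_{i=1}^m(\mathrm{Cay}(\mathbb{G}[\alpha_i]),g_i)$ is the $E$-graph whose vertex set is the quotient of $\bigcup_{i=1}^m\mathbb{G}[\alpha_i]\times\{i\}$ by the equivalence relation generated by $(g_ih,i)\approx(h,i+1)$ for $1\le i<m$ and $h\in\mathbb{G}[\alpha_i\cap\alpha_{i+1}]$, and whose $R_e$ is the image of $\bigcup_{i: e\in\alpha_i}\{((g,i),(ge,i)):g\in\mathbb{G}[\alpha_i]\}$; its length is $m$. A coset cycle of length $k\ge2$ in the $\alpha$-group $\mathbb{G}[\alpha]$ is a cyclically indexed family $(g_i,\beta_i)_{i\in\mathbb{Z}_k}$ with $g_i\in\mathbb{G}[\alpha]$, $\beta_i\subseteq\alpha$, such that $g_{i+1}\in g_i\mathbb{G}[\beta_i]$ and $g_i\mathbb{G}[\beta_i\cap\beta_{i-1}]\cap g_{i+1}\mathbb{G}[\beta_i\cap\beta_{i+1}]=\emptyset$ for all $i$; $N$-acyclic means no coset cycles of length $k$ with $2\le k\le N$. *)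

(* Defs.v *)
From HB Require Import structures.
From mathcomp Require Import all_boot monoid.
From Stdlib Require Import Relations.Relation_Definitions Relations.Relation_Operators.

Set Implicit Arguments.
Unset Strict Implicit.
Unset Printing Implicit Defensive.

Local Open Scope group_scope.

Section EGroups.
Variables (E : finType) (G : groupType) (iota : E -> G).

Definition wval (w : seq E) : G := foldr (fun e x => iota e * x) 1 w.

Definition is_E_group : Prop :=
  [/\ injective iota,
      (forall e, iota e != 1),
      (forall e, iota e * iota e = 1) &
      (forall g : G, exists w : seq E, g = wval w)].

Definition subgen (a : {set E}) (g : G) : Prop :=
  exists w : seq E, all (fun e => e \in a) w /\ g = wval w.

Definition in_coset (g : G) (b : {set E}) (x : G) : Prop :=
  exists h, subgen b h /\ x = g * h.

Variables (m : nat) (al : nat -> {set E}) (gs : nat -> G).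

Definition is_fac (alpha : {set E}) : Prop :=
  [/\ 1 <= m,
      (forall i, 1 <= i <= m -> al i \proper alpha),
      (forall i, 1 <= i < m -> subgen (al i) (gs i)) &
      (forall i, 1 < i < m ->
         ~ exists x, subgen (al i.-1 :&: al i) x /\
                     in_coset (gs i) (al i :&: al i.+1) x)].

Definition chain_gen : relation (G * nat)%type := fun u v =>
  exists i h, [/\ 1 <= i < m, subgen (al i :&: al i.+1) h,
                  u = (gs i * h, i) & v = (h, i.+1)].

Definition chain_eq : relation (G * nat)%type := clos_refl_sym_trans _ chain_gen.

Definition is_vertex (v : G * nat) : Prop :=
  1 <= v.2 <= m /\ subgen (al v.2) v.1.

(* R_e on the quotient (stated on representatives, closed under chain_eq) *)
Definition chain_R (e : E) : relation (G * nat)%type := fun u v =>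
  exists i g, [/\ 1 <= i <= m, e \in al i, subgen (al i) g,
                  chain_eq u (g, i) & chain_eq v (g * iota e, i)].

(* graph of pi_e: swap with the R_e-neighbour, or fix if there is none *)
Definition chain_pi (e : E) : relation (G * nat)%type := fun u v =>
  chain_R e u v \/ (chain_eq u v /\ ~ exists v', chain_R e u v').

(* graph of pi_w, pi_{e1...en} = pi_en o ... o pi_e1 *)
Fixpoint chain_piw (w : seq E) : relation (G * nat)%type :=
  match w with
  | [::] => chain_eq
  | e :: w' => fun u v => exists u', chain_pi e u u' /\ chain_piw w' u' v
  end.

Definition piw_identity (w : seq E) : Prop :=
  forall u v, is_vertex u -> chain_piw w u v -> chain_eq u v.

End EGroups.

Section CosetCycles.
Variables (E : finType) (G : groupType) (iota : E -> G).

Definition coset_cycle (alpha : {set E}) (k : nat)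
    (g : 'I_k -> G) (b : 'I_k -> {set E}) : Prop :=
  [/\ 2 <= k,
      (forall i, subgen iota alpha (g i)),
      (forall i, b i \subset alpha),
      (forall i, in_coset iota (g i) (b i) (g (ordS i))) &
      (forall i, ~ exists x,
          in_coset iota (g i) (b i :&: b (ord_pred i)) x /\
          in_coset iota (g (ordS i)) (b i :&: b (ordS i)) x)].

Definition N_acyclic (alpha : {set E}) (N : nat) : Prop :=
  forall k, 2 <= k <= N ->
    forall (g : 'I_k -> G) (b : 'I_k -> {set E}), ~ coset_cycle alpha g b.

End CosetCycles.

(* Main.v *)
Require Import Defs.
From HB Require Import structures.
From mathcomp Require Import all_boot monoid.
From Stdlib Require Import Relations.Relation_Definitions Relations.Relation_Operators.

Module Helpers.
Set Implicit Arguments.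
Unset Strict Implicit.
Unset Printing Implicit Defensive.
Local Open Scope group_scope.
Section Aux.
Variables (E : finType) (G : groupType) (iota : E -> G).
Hypothesis inv2 : forall e, iota e * iota e = 1.

Lemma wval_nil : wval iota [::] = 1. Proof. by []. Qed.
Lemma wval_cons e u : wval iota (e :: u) = iota e * wval iota u. Proof. by []. Qed.

Lemma wval_cat u v : wval iota (u ++ v) = wval iota u * wval iota v.
Proof. elim: u => [|e u IH] /=; first by rewrite mul1g. by rewrite IH mulgA. Qed.

Lemma wval_rev_mul s : wval iota (rev s) * wval iota s = 1.
Proof.
elim: s => [|e s IH] /=; first by rewrite mulg1.
rewrite rev_cons -cats1 wval_cat /= mulg1 -mulgA (mulgA (iota e)) inv2 mul1g //.
Qed.

Lemma subgen1 (D : {set E}) : subgen iota D 1.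
Proof. by exists [::]. Qed.

Lemma subgenMe (D : {set E}) x e : subgen iota D x -> e \in D -> subgen iota D (x * iota e).
Proof.
case=> w [Hw ->] He; exists (w ++ [:: e]); rewrite wval_cat /= mulg1 all_cat Hw /=.
by rewrite He.
Qed.

Lemma subgen_sub (D D' : {set E}) x : D \subset D' -> subgen iota D x -> subgen iota D' x.
Proof.
move=> sDD' [w [Hw ->]]; exists w; split=> //.
by apply/allP=> e /(allP Hw) /(subsetP sDD').
Qed.

Lemma subgen_filter (gam A D : {set E}) u : all (fun e => e \in gam) u ->
  (forall e, e \in gam -> e \in A -> e \in D) ->
  subgen iota D (wval iota (filter (fun e => e \in A) u)).
Proof.
move=> Hu HD; exists (filter (fun e => e \in A) u); split=> //.
apply/allP=> e; rewrite mem_filter => /andP[eA eu]; apply: HD eA.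
exact: (allP Hu).
Qed.

Lemma subgen_rev_filter (gam A D : {set E}) u : all (fun e => e \in gam) u ->
  (forall e, e \in gam -> e \in A -> e \in D) ->
  subgen iota D (wval iota (rev (filter (fun e => e \in A) u))).
Proof.
move=> Hu HD; exists (rev (filter (fun e => e \in A) u)); split=> //.
rewrite all_rev; apply/allP=> e; rewrite mem_filter => /andP[eA eu]; apply: HD eA.
exact: (allP Hu).
Qed.

Variables (m : nat) (al : nat -> {set E}) (gs : nat -> G).

Local Notation ceq := (chain_eq iota m al gs).
Local Notation cpiw := (chain_piw iota m al gs).

Lemma ceq_refl a : ceq a a. Proof. exact: rst_refl. Qed.
Lemma ceq_sym a b : ceq a b -> ceq b a. Proof. exact: rst_sym. Qed.
Lemma ceq_trans a b c : ceq a b -> ceq b c -> ceq a c. Proof. exact: rst_trans. Qed.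

Lemma piw_transfer w a a' b : ceq a a' -> cpiw w a' b -> cpiw w a b.
Proof.
case: w => [|e w] /= Haa'; first exact: ceq_trans.
case=> u' [[HR|[Heq Hno]] Hrest]; exists u'; split=> //.
- left; case: HR => i [g [H1 H2 H3 H4 H5]]; exists i, g; split=> //.
  exact: ceq_trans H4.
- right; split; first exact: ceq_trans Heq.
  move=> [v' [i [g [H1 H2 H3 H4 H5]]]]; apply: Hno; exists v', i, g; split=> //.
  exact: ceq_trans (ceq_sym Haa') H4.
Qed.

Lemma piw_cat u v a b c : cpiw u a b -> cpiw v b c -> cpiw (u ++ v) a c.
Proof.
elim: u a => [|e u IH] a /=; first by move=> Hab; apply: piw_transfer.
by case=> u' [H1 H2] Hv; exists u'; split=> //; apply: IH Hv.
Qed.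

Lemma inside_walk i x u : 1 <= i <= m -> subgen iota (al i) x ->
  all (fun e => e \in al i) u -> cpiw u (x, i) (x * wval iota u, i).
Proof.
move=> Hi; elim: u x => [|e u IH] x Hx /=; first by move=> _; rewrite mulg1; exact: ceq_refl.
case/andP=> He Hu; exists (x * iota e, i); split.
  left; exists i, x; split=> //; exact: ceq_refl.
rewrite mulgA; apply: IH Hu; exact: subgenMe.
Qed.

Definition Iso i0 c (D : {set E}) := forall d, subgen iota D d -> forall v,
  ~ chain_gen iota m al gs (c * d, i0) v /\ ~ chain_gen iota m al gs v (c * d, i0).

Definition inR i0 c (D : {set E}) (u : G * nat) := u.2 = i0 /\ exists d, subgen iota D d /\ u.1 = c * d.

Lemma region_closed i0 c (D : {set E}) u v : Iso i0 c D -> ceq u v ->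
  (inR i0 c D u -> inR i0 c D v) /\ (inR i0 c D v -> inR i0 c D u).
Proof.
move=> Hiso H; induction H as [x y Hg|x|x y _ [IH1 IH2]|x y z _ [IH1 IH2] _ [IH3 IH4]].
- split=> -[H2 [d [Hd H1]]].
  + have [N1 _] := Hiso d Hd y; exfalso; apply: N1; destruct x as [x1 x2]; simpl in H1, H2.
    by rewrite -H1 -H2.
  + have [_ N2] := Hiso d Hd x; exfalso; apply: N2; destruct y as [y1 y2]; simpl in H1, H2.
    by rewrite -H1 -H2.
- by split.
- by split.
- by split=> H; [apply: IH3; apply: IH1 | apply: IH2; apply: IH4].
Qed.

Lemma region_walk i0 c (D gam : {set E}) : 1 <= i0 <= m -> subgen iota (al i0) c ->
  D \subset al i0 -> (forall e, e \in gam -> e \in al i0 -> e \in D) ->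
  Iso i0 c D -> forall u, all (fun e => e \in gam) u -> forall d, subgen iota D d ->
  cpiw u (c * d, i0) (c * (d * wval iota (filter (fun e => e \in al i0) u)), i0).
Proof.
move=> Hi0 Hc sD HD Hiso; elim=> [|e u IH] /= Hu d Hd.
  by rewrite mulg1; exact: ceq_refl.
case/andP: Hu => He Hu.
case Hei: (e \in al i0) => /=.
- exists (c * (d * iota e), i0); split.
    left; exists i0, (c * d); split=> //.
    + case: Hc => w [Hw ->]; case: (subgen_sub sD Hd) => w' [Hw' ->].
      by exists (w ++ w'); rewrite wval_cat all_cat Hw Hw'.
    + exact: ceq_refl.
    + by rewrite mulgA; exact: ceq_refl.
  rewrite (mulgA d); apply: (IH Hu (d * iota e)); apply: subgenMe Hd _; exact: HD.
- exists (c * d, i0); split.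
    right; split; first exact: ceq_refl.
    move=> [v' [i [g [H1 H2 H3 H4 H5]]]].
    have [Hr _] := region_closed Hiso H4.
    have [/= Hi _] : inR i0 c D (g, i) by apply: Hr; split=> //; exists d.
    by move: H2; rewrite Hi Hei.
  exact: IH.
Qed.

End Aux.
Lemma ordS_inord n j : j < n -> ordS (inord j : 'I_n.+1) = inord j.+1.
Proof.
move=> Hj; apply: val_inj; rewrite /= !inordK ?modn_small //; exact: ltnW.
Qed.

Lemma ordS_inord_last n : ordS (inord n : 'I_n.+1) = inord 0.
Proof. by apply: val_inj; rewrite /= !inordK // modnn. Qed.

Lemma ord_pred_inord n j : 0 < j <= n -> ord_pred (inord j : 'I_n.+1) = inord j.-1.
Proof.
case: j => // j /= Hj; rewrite -ordS_inord //; exact: ordSK.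
Qed.

Section Cyc.
Variables (E : finType) (G : groupType) (iota : E -> G).
Variables (n : nat) (g : 'I_n.+1 -> G) (b : 'I_n.+1 -> {set E}).
Hypothesis Hstep : forall i, in_coset iota (g i) (b i) (g (ordS i)).
Hypothesis Hcond : forall i, ~ exists x,
          in_coset iota (g i) (b i :&: b (ord_pred i)) x /\
          in_coset iota (g (ordS i)) (b i :&: b (ordS i)) x.

Lemma cond_nat i : 0 < i < n -> ~ exists x,
  subgen iota (b (inord i.-1) :&: b (inord i)) x /\
  in_coset iota ((g (inord i))^-1 * g (inord i.+1)) (b (inord i) :&: b (inord i.+1)) x.
Proof.
case/andP=> Hi0 Hin [x [Hx [h [Hh Ex]]]]; apply (@Hcond (inord i)).
exists (g (inord i) * x); split.
  exists x; split; last by [].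
  have -> : ord_pred (inord i : 'I_n.+1) = inord i.-1.
    by apply: ord_pred_inord; rewrite Hi0 /=; exact: ltnW.
  by rewrite setIC.
exists h; rewrite ordS_inord //; split=> //.
by rewrite Ex !mulgA mulgV mul1g.
Qed.

Lemma step_nat j : j < n -> subgen iota (b (inord j)) ((g (inord j))^-1 * g (inord j.+1)).
Proof.
move=> Hj; case: (Hstep (inord j)) => h [Hh Eh].
by rewrite -ordS_inord // Eh mulKg.
Qed.

Lemma step_last : subgen iota (b (inord n)) ((g (inord n))^-1 * g (inord 0)).
Proof.
case: (Hstep (inord n)) => h [Hh Eh].
by rewrite -ordS_inord_last Eh mulKg.
Qed.

Lemma all_proper (alpha : {set E}) : (forall i, b i \subset alpha) -> forall j, b j \proper alpha.
Proof.
move=> Hb j; rewrite properE Hb /=; apply/negP => Hsub.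
apply (@Hcond (ordS j)); rewrite ordSK.
have EE : b (ordS j) :&: b j = b (ordS j).
  by apply/setIidPl; exact: subset_trans (Hb _) Hsub.
exists (g (ordS (ordS j))); split; first by rewrite EE; exact: Hstep.
by exists 1; split; [exact: subgen1 | rewrite mulg1].
Qed.

End Cyc.
End Helpers.
Import Helpers.

Local Open Scope group_scope.
Lemma word_of {E : finType} {G : groupType} {iota : E -> G} {A alpha : {set E}} {x} :
  A \subset alpha -> subgen iota A x ->
  exists u, [/\ all (fun e => e \in A) u, all (fun e => e \in alpha) u & x = wval iota u].
Proof.
move=> sA [u [Hu ->]]; exists u; split=> //.
by apply/allP=> e /(allP Hu) /(subsetP sA).
Qed.

Theorem mainTheorem8 (E : finType) (G : groupType) (iota : E -> G)
    (HG : is_E_group iota) (alpha : {set E}) (n : nat) (Hn : 1 <= n)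
    (Hcompat : forall (m : nat) (al : nat -> {set E}) (gs : nat -> G),
        1 <= m <= n -> is_fac iota m al gs alpha ->
        forall w : seq E, all (fun e => e \in alpha) w -> wval iota w = 1 ->
        piw_identity iota m al gs w) :
  N_acyclic iota alpha (n + 2).
Proof.
have inv2 : forall e, iota e * iota e = 1 by case: HG.
move=> k; case: k => [|[|m']] // /andP[_ Hk] g b [_ _ Hb Hstep Hcond].
have Hp := all_proper Hstep Hcond Hb.
case: m' Hk g b Hb Hstep Hcond Hp => [|m'] Hk g b Hb Hstep Hcond Hp.
-
  set B0 := b (inord 0); set B1 := b (inord 1).
  set al := fun _ : nat => B0; set gs := fun _ : nat => (1 : G).
  have [u0 [Hu0 Hu0a Eu0]] := word_of (Hb (inord 0)) (step_nat Hstep (ltn0Sn 0)).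
  have [u1 [Hu1 Hu1a Eu1]] := word_of (Hb (inord 1)) (step_last Hstep).
  set h0 := (g (inord 0))^-1 * g (inord 1) in Eu0.
  set D := B0 :&: B1.
  have Iso1 : forall c, Iso iota 1%N al gs 1%N c D.
    by move=> c d _ v; split=> -[i [h [/andP[H1 H2] _ _ _]]]; case: i H1 H2 => [|[|i]].
  have Hal : all (fun e => e \in al 1%N) u0 by [].
  have W1 := inside_walk gs (i:=1%N) (m:=1%N) (erefl true) (subgen1 iota (al 1%N)) Hal.
  rewrite mul1g -Eu0 in W1.
  have HD : forall e, e \in B1 -> e \in al 1%N -> e \in D.
    by move=> e H1 H2; rewrite inE H1 andbT.
  have W2 := region_walk (i0:=1%N) (c := h0) (m:=1%N) (gs := gs) (erefl true)
    (subgen_sub (subxx _) (step_nat Hstep (ltn0Sn 0))) (subsetIl _ _) HD (Iso1 _) Hu1 (subgen1 _ _).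
  rewrite mulg1 mul1g in W2.
  have W := piw_cat W1 W2.
  have Hfac : is_fac iota 1%N al gs alpha.
    split=> // [i _|i /andP[H1 H2]|i /andP[H1 H2]]; first exact: Hp.
    - by case: i H1 H2 => [|[|i]].
    - by case: i H1 H2 => [|[|[|i]]].
  have Hw : all (fun e => e \in alpha) (u0 ++ u1) by rewrite all_cat Hu0a Hu1a.
  have Hw1 : wval iota (u0 ++ u1) = 1.
    by rewrite wval_cat -Eu0 -Eu1 /h0 !mulgA mulgK mulVg.
  have Hv : is_vertex iota 1%N al (1, 1%N).
    by split=> //; exact: subgen1.
  have Heq := Hcompat 1%N al gs (Hn : 0 < 1 <= n) Hfac _ Hw Hw1 _ _ Hv W.
  have [Hr _] := region_closed (Iso1 1) Heq.
  have [_ [d [Hd Ed]]] : inR iota 1%N 1 D (h0 * wval iota [seq e <- u1 | e \in al 1%N], 1%N).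
    by apply: Hr; split=> //; exists 1; split; [exact: subgen1 | rewrite mulg1].
  simpl in Ed.
  apply (@Hcond (inord 0)).
  have Ep : ord_pred (inord 0 : 'I_2) = inord 1 by apply: val_inj; rewrite /= !inordK.
  rewrite Ep ordS_inord //.
  rewrite mul1g in Ed.
  exists (g (inord 0) * d); split; first by exists d.
  exists (wval iota [seq e <- u1 | e \in al 1%N]); split.
    by apply: subgen_filter Hu1 HD.
  by rewrite -Ed /h0 !mulgA mulgV mul1g.
- set M := m'.+1.
  set al := fun j : nat => b (inord j).
  set gs := fun j : nat => (g (inord j))^-1 * g (inord j.+1).
  have Hc : forall i, 0 < i < M.+1 -> ~ exists x,
      subgen iota (al i.-1 :&: al i) x /\ in_coset iota (gs i) (al i :&: al i.+1) x.
    exact: (cond_nat Hcond).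
  have Hsg : forall j, j < M.+1 -> subgen iota (al j) (gs j).
    move=> j Hj; exact: (step_nat Hstep Hj).
  have Hlast : subgen iota (al M.+1) ((g (inord M.+1))^-1 * g (inord 0)).
    exact: (step_last Hstep).
  have Hfac : is_fac iota M al gs alpha.
    split=> // [i _|i /andP[H1 H2]|i /andP[H1 H2] ]; first exact: Hp.
    - by apply: Hsg; apply: ltnW.
    - apply: Hc; rewrite (ltn_trans _ H1) //=; exact: ltnW.
  have Mid : forall j, 0 < j <= M -> exists v, [/\ all (fun e => e \in alpha) v,
      wval iota v = (g (inord 1))^-1 * g (inord j.+1) &
      chain_piw iota M al gs v (1, 1%N) (gs j, j)].
    elim=> [|j IH] // /andP[_ Hj].
    have [u [Hu Hua Eu]] := word_of (Hb _) (Hsg j.+1 Hj).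
    have Wu := inside_walk gs (iota:=iota) (al:=al) (i:=j.+1) (m:=M) (x:=1) (u:=u) Hj (subgen1 _ _) Hu.
    rewrite mul1g -Eu in Wu.
    case: j IH Hj Hu Eu Wu => [|j] IH Hj Hu Eu Wu.
    + exists u; split; [done | by rewrite -Eu | exact: Wu].
    + have [v [Hva Ev Wv]] := IH (ltnW Hj).
      exists (v ++ u); split.
      * by rewrite all_cat Hva Hua.
      * by rewrite wval_cat Ev -Eu /gs !mulgA mulgK.
      * apply: piw_cat Wv _; apply: piw_transfer Wu.
        apply: rst_step; exists j.+1, 1; split=> //; first exact: subgen1.
        by rewrite mulg1.
  have [v [Hva Ev Wv]] := Mid M (leqnn _).
  have [u0 [Hu0 Hu0a Eu0]] := word_of (Hb _) (Hsg 0 (ltn0Sn _)).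
  have [ul [Hul Hula Eul]] := word_of (Hb _) Hlast.
  set D0 := al 0 :&: al 1%N.
  set D1 := al M :&: al M.+1.
  have Iso0 : Iso iota M al gs 1%N 1 D0.
    move=> d Hd w; split.
    - move=> [i [h [/andP[H1 H2] Hh E1 _]]]; case: E1 => E1 Ei; subst i.
      apply: (Hc 1%N) => //; exists d; split; first exact: Hd.
      by exists h; rewrite -E1 mul1g.
    - by move=> [i [h [/andP[H1 H2] Hh _ E2]]]; case: E2 => _ Ei; subst i.
  have Iso1 : Iso iota M al gs M (gs M) D1.
    move=> d Hd w; split.
    - move=> [i [h [/andP[H1 H2] Hh E1 _]]]; case: E1 => _ Ei; subst i.
      by rewrite ltnn in H2.
    - move=> [i [h [/andP[H1 H2] Hh _ E2]]]; case: E2 => E2 Ei.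
      apply: (Hc M); first by rewrite /= ltnSn.
      exists h; split; first by subst i; exact: Hh.
      by exists d; rewrite E2.
  set y := wval iota (rev [seq e <- u0 | e \in al 1%N]).
  have Hy : subgen iota D0 y.
    apply: subgen_rev_filter Hu0 _ => e H1 H2; by rewrite inE H1.
  have HD0 : forall e, e \in al 0 -> e \in al 1%N -> e \in D0.
    by move=> e H1 H2; rewrite inE H1.
  have HD1 : forall e, e \in al M.+1 -> e \in al M -> e \in D1.
    by move=> e H1 H2; rewrite inE H1 H2.
  have HM : 0 < M <= M by rewrite leqnn.
  have W0 := region_walk (i0:=1%N) (c:=1) (m:=M) (gs:=gs) (al:=al) (erefl true)
    (subgen1 _ _) (subsetIr _ _) HD0 Iso0 Hu0 Hy.
  have W2 := region_walk (i0:=M) (c:=gs M) (m:=M) (gs:=gs) (al:=al) HM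
    (Hsg M (ltnSn _)) (subsetIl _ _) HD1 Iso1 Hul (subgen1 _ _).
  rewrite !mul1g in W0.
  rewrite mulg1 mul1g in W2.
  rewrite /y wval_rev_mul // in W0.
  have W := piw_cat W0 (piw_cat Wv W2).
  have Hw : all (fun e => e \in alpha) (u0 ++ v ++ ul) by rewrite !all_cat Hu0a Hva Hula.
  have Hw1 : wval iota (u0 ++ v ++ ul) = 1.
    by rewrite !wval_cat -Eu0 Ev -Eul /gs !mulgA !mulgK mulVg.
  have HMn : 0 < M <= n by rewrite /=; rewrite -(leq_add2r 2) addn2.
  have Hv : is_vertex iota M al (y, 1%N).
    by split=> //; exact: subgen_sub (subsetIr _ _) Hy.
  have Heq := Hcompat M al gs HMn Hfac _ Hw Hw1 _ _ Hv W.
  have [Hr _] := region_closed Iso0 Heq.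
  have [HM1 [d [Hd Ed]]] : inR iota 1%N 1 D0
      (gs M * wval iota [seq e <- ul | e \in al M], M).
    by apply: Hr; split=> //; exists y; split=> //; rewrite mul1g.
  simpl in HM1, Ed; rewrite mul1g in Ed.
  have Hz : subgen iota D1 (wval iota [seq e <- ul | e \in al M]).
    exact: subgen_filter Hul HD1.
  move: Hz Ed; rewrite /D1 HM1 => Hz Ed.
  apply: (Hc 1%N) => //; exists d; split=> //.
  by exists (wval iota [seq e <- ul | e \in al 1%N]); split.
Qed.
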